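(* Let $(L,\preceq)$ be a lattice and $\delta$ a local congruence on $L$. If two equivalence classes $[x]_\delta,[y]_\delta\in L/\delta$ satisfy $[x]_\delta\preceq_\delta[y]_\delta$ and $[y]_\delta\preceq_\delta[x]_\delta$ with $x_1\preceq y_1$ and $y_2\preceq x_2$ for some $x_1,x_2\in[x]_\delta$ and $y_1,y_2\in[y]_\delta$, then $[x]_\delta=[y]_\delta$.
   Context: For an equivalence relation $\delta$ on $L$, $[a]_\delta$ is the class of $a$ and $L/\delta$ the set of classes. A local congruence on a lattice $(L,\preceq)$ is an equivalence relation each of whose classes is a sublattice of $L$ and is convex (if $u,v$ are in the class and $u\preceq w\preceq v$, then $w$ is in the class). A $\delta$-sequence from $p_0$ to $p_n$ is a finite sequence $(p_0,p_1,\dots,p_n)$ of elements of $L$ with $n\ge1$ such that for each $i\in\{1,\dots,n\}$ either $(p_{i-1},p_i)\in\delta$ or $p_{i-1}\preceq p_i$. The relation $\preceq_\delta$ on $L/\delta$ is defined by $[x]_\delta\preceq_\delta[y]_\delta$ iff there exists a $\delta$-sequence from some $x'\in[x]_\delta$ to some $y'\in[y]_\delta$. *)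

(* Defs.v *)
From mathcomp Require Import all_boot all_order.
Set Implicit Arguments. Unset Strict Implicit. Unset Printing Implicit Defensive.
Import Order.LTheory.
Local Open Scope order_scope.

Section LocalCongruence.
Context {disp : Order.disp_t} {L : latticeType disp}.

Definition equivalence_rel (delta : L -> L -> Prop) : Prop :=
  (forall a, delta a a) /\
  (forall a b, delta a b -> delta b a) /\
  (forall a b c, delta a b -> delta b c -> delta a c).

Definition eqclass (delta : L -> L -> Prop) (a : L) : L -> Prop :=
  fun b => delta a b.

Definition local_congruence (delta : L -> L -> Prop) : Prop :=
  equivalence_rel delta /\
  (forall a u v, eqclass delta a u -> eqclass delta a v ->
     eqclass delta a (u `&` v) /\ eqclass delta a (u `|` v)) /\
  (forall a u v w, eqclass delta a u -> eqclass delta a v ->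
     u <= w -> w <= v -> eqclass delta a w).

Fixpoint dpath (delta : L -> L -> Prop) (p : L) (s : seq L) : Prop :=
  match s with
  | [::] => True
  | q :: s' => (delta p q \/ p <= q) /\ dpath delta q s'
  end.

Definition delta_seq (delta : L -> L -> Prop) (p q : L) : Prop :=
  exists s : seq L, s <> [::] /\ last p s = q /\ dpath delta p s.

Definition class_le (delta : L -> L -> Prop) (X Y : L -> Prop) : Prop :=
  exists x' y', X x' /\ Y y' /\ delta_seq delta x' y'.

End LocalCongruence.

(* Main.v *)
Require Import Defs.
From mathcomp Require Import all_boot all_order.
From Stdlib Require Import FunctionalExtensionality PropExtensionality.
Local Open Scope order_scope.
Import Order.LTheory.

Theorem corollary4p6 (disp : Order.disp_t) (L : latticeType disp)
  (delta : L -> L -> Prop) (x y x1 x2 y1 y2 : L) :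
  local_congruence delta ->
  class_le delta (eqclass delta x) (eqclass delta y) ->
  class_le delta (eqclass delta y) (eqclass delta x) ->
  eqclass delta x x1 -> eqclass delta x x2 ->
  eqclass delta y y1 -> eqclass delta y y2 ->
  x1 <= y1 -> y2 <= x2 ->
  eqclass delta x = eqclass delta y.
Proof.
move=> [[Hr [Hs Ht]] [Hlat Hcv]] _ _ Hx1 Hx2 Hy1 Hy2 l1 l2.
have [Xb Xt] := Hlat x x1 x2 Hx1 Hx2.
have [Yb Yt] := Hlat y y1 y2 Hy1 Hy2.
set w := (y1 `|` y2) `&` (x1 `|` x2).
have wX : eqclass delta x w.
  apply: (Hcv x (x1 `&` x2) (x1 `|` x2)) => //; last exact: leIr.
  rewrite lexI; apply/andP; split.
    exact: le_trans (leIl _ _) (le_trans l1 (leUl _ _)).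
  exact: le_trans (leIl _ _) (leUl _ _).
have wY : eqclass delta y w.
  apply: (Hcv y (y1 `&` y2) (y1 `|` y2)) => //; last exact: leIl.
  rewrite lexI; apply/andP; split.
    exact: le_trans (leIr _ _) (leUr _ _).
  exact: le_trans (leIr _ _) (le_trans l2 (leUr _ _)).
have xy : delta x y by apply: Ht wX (Hs _ _ wY).
apply: functional_extensionality => b; apply: propositional_extensionality.
rewrite /eqclass; split => H.
  exact: Ht (Hs _ _ xy) H.
exact: Ht xy H.
Qed.
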